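(* Let $G$ be a compact Hausdorff topological group and let $X$ be a Hausdorff topological group on which $G$ acts (continuously) by topological group homomorphisms, such that $X$ is $G$-connected. Then $\mathbf{TC}_G(X)=\mathrm{cat}_G(X)$.
   Context: $X$ is $G$-connected if $X^H=\{x: hx=x\ \forall h\in H\}$ is path-connected for every closed subgroup $H\le G$. A $G$-homotopy is an equivariant homotopy with trivial action on $I$. An invariant set is $G$-categorical if its inclusion is $G$-homotopic to a map into a single orbit; $\mathrm{cat}_G(X)$ is the least number of open $G$-categorical sets covering $X$. $\mathbf{TC}_G(X)$ is the least $k$ such that $X\times X$ (diagonal action) is covered by $k$ $G$-invariant open sets $U_i$ each admitting a $G$-map $s\colon U_i\to X^I$ with $\pi s$ $G$-homotopic to the inclusion ($\infty$ if none); $X^I$ is the path space (compact-open topology, action $(g\gamma)(t)=g\gamma(t)$), $\pi(\gamma)=(\gamma(0),\gamma(1))$. *)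

(* Defs.v *)
From HB Require Import structures.
From mathcomp Require Import all_boot all_order all_algebra.
From mathcomp Require Import all_classical all_reals all_analysis.
From mathcomp Require Import Rstruct Rstruct_topology.
Set Implicit Arguments. Unset Strict Implicit. Unset Printing Implicit Defensive.
Import Order.TTheory GRing.Theory Num.Theory.
Local Open Scope classical_set_scope.
Local Open Scope ring_scope.

Definition unit_interval : set Rdefinitions.R := `[0%R, 1%R]%classic.
Notation I01 := (set_type unit_interval).

Lemma I01_zero_mem : (0%R : Rdefinitions.R) \in unit_interval.
Proof. by apply/mem_set; rewrite /unit_interval /= in_itv /= lexx ler01. Qed.
Lemma I01_one_mem : (1%R : Rdefinitions.R) \in unit_interval.
Proof. by apply/mem_set; rewrite /unit_interval /= in_itv /= lexx ler01. Qed.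

Definition I0 : I01 := exist _ 0%R I01_zero_mem.
Definition I1 : I01 := exist _ 1%R I01_one_mem.

(** The path space X^I: maps I -> X with the compact-open topology
    (only continuous maps are used as paths). *)
Definition path_space (X : topologicalType) := {compact-open, I01 -> X}.

Definition is_group {G : Type} (mul : G -> G -> G) (inv : G -> G) (one : G) : Prop :=
  [/\ forall x y z, mul x (mul y z) = mul (mul x y) z,
      forall x, mul one x = x, forall x, mul x one = x,
      forall x, mul (inv x) x = one & forall x, mul x (inv x) = one].

Definition is_topological_group {G : topologicalType}
  (mul : G -> G -> G) (inv : G -> G) (one : G) : Prop :=
  [/\ is_group mul inv one,
      continuous (fun p : G * G => mul p.1 p.2) & continuous inv].

Definition is_continuous_action {G X : topologicalType}
  (mulG : G -> G -> G) (oneG : G) (act : G -> X -> X) : Prop :=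
  [/\ forall x, act oneG x = x,
      forall g h x, act (mulG g h) x = act g (act h x) &
      continuous (fun p : G * X => act p.1 p.2)].

Definition acts_by_homomorphisms {G X : Type} (mulX : X -> X -> X)
  (act : G -> X -> X) : Prop :=
  forall g x y, act g (mulX x y) = mulX (act g x) (act g y).

Definition closed_subgroup {G : topologicalType}
  (mul : G -> G -> G) (inv : G -> G) (one : G) (H : set G) : Prop :=
  [/\ closed H, H one, forall x y, H x -> H y -> H (mul x y)
    & forall x, H x -> H (inv x)].

Definition fixed_set {G X : Type} (act : G -> X -> X) (H : set G) : set X :=
  [set x | forall h, H h -> act h x = x].

Definition path_connected {X : topologicalType} (A : set X) : Prop :=
  forall x y, A x -> A y ->
    exists gamma : I01 -> X, [/\ continuous gamma, gamma I0 = x, gamma I1 = y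
                               & forall t, A (gamma t)].

Definition G_connected {G X : topologicalType}
  (mulG : G -> G -> G) (invG : G -> G) (oneG : G) (act : G -> X -> X) : Prop :=
  forall H : set G, closed_subgroup mulG invG oneG H -> path_connected (fixed_set act H).

Definition invariant {G X : Type} (act : G -> X -> X) (U : set X) : Prop :=
  forall g x, U x -> U (act g x).

Definition orbit {G X : Type} (act : G -> X -> X) (x0 : X) : set X :=
  [set act g x0 | g in [set: G]].

Definition diag_act {G X : Type} (act : G -> X -> X) (g : G) (u : X * X) : X * X :=
  (act g u.1, act g u.2).

(** U is G-categorical: the inclusion U -> X is G-homotopic (trivial action
    on I) to a G-map with values in a single orbit. *)
Definition G_categorical {G X : topologicalType} (act : G -> X -> X) (U : set X) : Prop :=
  invariant act U /\
  exists (x0 : X) (H : X * I01 -> X),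
    [/\ {within U `*` [set: I01], continuous H},
        forall g x t, U x -> H (act g x, t) = act g (H (x, t)),
        forall x, U x -> H (x, I0) = x
      & forall x, U x -> orbit act x0 (H (x, I1))].

Definition cat_cover {G X : topologicalType} (act : G -> X -> X) (k : nat) : Prop :=
  exists U : 'I_k -> set X,
    [/\ forall i, open (U i), forall i, G_categorical act (U i)
      & \bigcup_i U i = [set: X]].

(** U subset X x X admits an equivariant motion planner s : U -> X^I with
    pi o s G-homotopic to the inclusion. *)
Definition G_motion_planner {G X : topologicalType} (act : G -> X -> X)
  (U : set (X * X)) : Prop :=
  exists (s : X * X -> path_space X) (H : (X * X) * I01 -> X * X),
    [/\ forall u, U u -> continuous (s u : I01 -> X),
        {within U, continuous s},
        forall g u, U u -> s (diag_act act g u) = (fun t => act g (s u t)) :> (I01 -> X)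
      & [/\ {within U `*` [set: I01], continuous H},
        forall g u t, U u -> H (diag_act act g u, t) = diag_act act g (H (u, t)),
        forall u, U u -> H (u, I0) = (s u I0, s u I1)
      & forall u, U u -> H (u, I1) = u]].

Definition TC_cover {G X : topologicalType} (act : G -> X -> X) (k : nat) : Prop :=
  exists U : 'I_k -> set (X * X),
    [/\ forall i, open (U i), forall i, invariant (diag_act act) (U i),
        forall i, G_motion_planner act (U i)
      & \bigcup_i U i = [set: X * X]].

(** Least natural number satisfying P, or None (= infinity) if there is none. *)
Definition least_nat (P : nat -> Prop) : option nat :=
  match pselect (exists n, P n) with
  | left h =>
      Some (@ex_minn (fun n => `[< P n >])
              (let: ex_intro n hn := h in ex_intro _ n (asboolT hn)))
  | right _ => None
  end.

Definition catG {G X : topologicalType} (act : G -> X -> X) : option nat :=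
  least_nat (cat_cover act).

Definition TCG {G X : topologicalType} (act : G -> X -> X) : option nat :=
  least_nat (TC_cover act).

(* Main.v *)
Require Import Defs.
From HB Require Import structures.
From mathcomp Require Import all_boot all_order all_algebra.
From mathcomp Require Import all_classical all_reals all_analysis.
From mathcomp Require Import Rstruct Rstruct_topology.
From mathcomp Require Import lra.
Set Implicit Arguments. Unset Strict Implicit. Unset Printing Implicit Defensive.
Import Order.TTheory GRing.Theory Num.Theory.
Local Open Scope classical_set_scope.
Local Open Scope ring_scope.

Lemma rev_mem (t : I01) : (1 - set_val t : Rdefinitions.R) \in unit_interval.
Proof.
case: t => x xi /=; have := set_mem xi; rewrite /unit_interval /= in_itv /= => /andP[x0 x1].
rewrite [set_val _]/=.
apply/mem_set; rewrite /= in_itv /=; apply/andP; split; rewrite set_valE /=; lra.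
Qed.

Definition revI (t : I01) : I01 := @exist _ (fun x => x \in unit_interval) _ (rev_mem t).

Lemma revI_cont : continuous revI.
Proof.
suff H : continuous (set_val \o revI) by exact: (continuous_comp_initial H).
have -> : (set_val \o revI) = (fun t : I01 => 1 - set_val t).
  by apply: funext => t; rewrite !set_valE.
move=> t.
have -> : (fun t : I01 => 1 - set_val t) = (fun y : Rdefinitions.R => 1 - y) \o set_val by [].
apply: continuous_comp; first exact: initial_continuous.
have h : {for (set_val t : Rdefinitions.R^o), continuous (fun y : Rdefinitions.R^o => 1 - y)}.
  by apply: continuousB; [exact: cvg_cst | exact: cvg_id].
exact: h.
Qed.

Lemma revI0 : revI I0 = I1.
Proof. by apply: val_inj => /=; rewrite subr0. Qed.
Lemma revI1 : revI I1 = I0.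
Proof. by apply: val_inj => /=; rewrite subrr. Qed.

Lemma clamp_mem (x : Rdefinitions.R) : (Num.min (Num.max x 0) 1) \in unit_interval.
Proof.
apply/mem_set; rewrite /unit_interval /= in_itv /=; apply/andP; split.
  by rewrite le_min ler01 le_max lexx orbT.
by rewrite ge_min lexx orbT.
Qed.

Definition clampI (x : Rdefinitions.R) : I01 := @exist _ (fun x => x \in unit_interval) _ (clamp_mem x).

Lemma clampI_cont : continuous clampI.
Proof.
apply: (@continuous_comp_initial _ _ _ set_val) => /=.
move=> x.
have h : {for (x : Rdefinitions.R^o), continuous ((id \max (fun _ : Rdefinitions.R^o => 0)) \min (fun _ => 1))}.
  apply: continuous_min; last exact: cvg_cst.
  apply: continuous_max; last exact: cvg_cst.
  exact: cvg_id.
move: h; congr (_ --> _).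
Qed.

Lemma I01_compact : compact [set: I01].
Proof.
have -> : [set: I01] = clampI @` `[0, 1].
  apply/seteqP; split => // t _; exists (set_val t).
    by case: t => x xi; have := set_mem xi.
  case: t => x xi; apply: val_inj => /=.
  have := set_mem xi; rewrite /unit_interval /= in_itv /= => /andP[x0 x1].
  by rewrite (max_idPl x0) (min_idPl x1).
apply: continuous_compact; last exact: segment_compact.
exact: continuous_subspaceT clampI_cont.
Qed.

Lemma eval_at {A X : topologicalType} (f : A -> path_space X) (a : A) (t : I01) :
  {for a, continuous f} -> continuous (f a : I01 -> X) ->
  {for (a, t), continuous (fun p : A * I01 => (f p.1 : I01 -> X) p.2)}.
Proof.
move=> fa cfa D.
rewrite /= nbhsE.
move=> [OO [oO Ofat]] /filterS; apply.
have reg : regular_space I01 := uniform_regular.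
have [R Rt RO] : exists2 R, nbhs t R & forall z, closure R z -> OO ((f a : I01 -> X) z).
  have [] := reg t ((f a : I01 -> X) @^-1` OO); first by apply: cfa; exact: open_nbhs_nbhs.
  by move=> R ? ?; exists R.
have cK : compact (closure R).
  apply: (subclosed_compact _ I01_compact) => //; exact: closed_closure.
exists (f @^-1` [set g : path_space X | (g : I01 -> X) @` closure R `<=` OO], closure R).
  split => /=.
    apply: fa; apply: open_nbhs_nbhs; split; first exact: compact_open_open.
    by move=> _ [z Rz <-]; apply: RO.
  by apply: filterS Rt; exact: subset_closure.
by case=> a' r /= [fK Kr]; apply: fK; exists r.
Qed.

Lemma lift_cont {G Y T X : topologicalType} (a : G -> X) (Phi : G * T -> X)
  (f : Y -> X) (c : Y -> G) (y : Y) (t : T) :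
  compact [set: G] -> hausdorff_space X -> continuous a -> continuous Phi ->
  {for y, continuous f} ->
  (\forall y' \near y, a (c y') = f y') ->
  (forall g, a g = f y -> Phi (g, t) = Phi (c y, t)) ->
  {for (y, t), continuous (fun p : Y * T => Phi (c p.1, p.2))}.
Proof.
move=> cG hX ca cPhi cf near_c eqPhi W /= WPhi.
have cov : \forall i \near (y, t), [set: G] `<=` (fun g => a g = f i.1 -> W (Phi (g, i.2))).
  move/compact_near_coveringP: cG => /(_ (Y * T)%type (nbhs (y, t))
    (fun i g => a g = f i.1 -> W (Phi (g, i.2)))); apply.
  move=> g _.
  case: (pselect (a g = f y)) => [agfy|nagfy].
    have : nbhs (g, t) (Phi @^-1` W) by apply: cPhi; rewrite /= eqPhi.
    case=> [[A B] /= [Ag Bt] ABW].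
    exists (A, [set i : Y * T | B i.2]).
      split => //; exists (setT, B) => //; first by split => //; exact: filterT.
      by case=> ? ? [].
    by move=> [g' i] /= [Ag' Bi] _; apply: (ABW (g', i.2)).
  have ncl : ~ cluster (nbhs (a g)) (f y) by move=> /hX.
  move: ncl; rewrite /cluster => /existsNP [A /existsNP [B /not_implyP [nA /not_implyP [nB AB]]]].
  exists (a @^-1` A, [set i : Y * T | B (f i.1)]).
    split; first exact: ca.
    exists (f @^-1` B, setT) => //; first by split => //; [exact: cf | exact: filterT].
    by case=> ? ? [].
  move=> [g' i] /= [Ag' Bi] eq; exfalso; apply: AB; exists (a g'); split => //.
  by rewrite eq.
have nc : \forall p \near (y, t), a (c p.1) = f p.1.
  exists ([set y' | a (c y') = f y'], setT) => //; first by split => //; exact: filterT.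
  by case=> ? ? [].
suff : \forall p \near (y, t), W (Phi (c p.1, p.2)) by [].
near=> p; apply: (near cov p) => //; exact: (near nc p).
Unshelve. all: by end_near.
Qed.

Lemma grp_mulVK {T : Type} (mul : T -> T -> T) inv one : is_group mul inv one ->
  forall x y, mul (inv x) (mul x y) = y.
Proof. by case=> A l1 r1 lv rv x y; rewrite A lv l1. Qed.

Lemma grp_mulKV {T : Type} (mul : T -> T -> T) inv one : is_group mul inv one ->
  forall x y, mul x (mul (inv x) y) = y.
Proof. by case=> A l1 r1 lv rv x y; rewrite A rv l1. Qed.

Lemma grp_mulVr {T : Type} (mul : T -> T -> T) inv one : is_group mul inv one ->
  forall x y, mul (mul y (inv x)) x = y.
Proof. by case=> A l1 r1 lv rv x y; rewrite -A lv r1. Qed.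

Lemma grp_inv_uniq {T : Type} (mul : T -> T -> T) inv one : is_group mul inv one ->
  forall a b, mul a b = one -> a = inv b.
Proof.
move=> gr a b ab; case: (gr) => A l1 r1 lv rv.
by rewrite -[a]r1 -(rv b) A ab l1.
Qed.

Lemma grp_inv1 {T : Type} (mul : T -> T -> T) inv one : is_group mul inv one ->
  inv one = one.
Proof.
move=> gr; case: (gr) => A l1 r1 lv rv.
by rewrite -[inv one]r1 lv.
Qed.

Lemma act_one_fix {G X : Type} (mulX : X -> X -> X) invX oneX (act : G -> X -> X) :
  is_group mulX invX oneX -> acts_by_homomorphisms mulX act ->
  forall g, act g oneX = oneX.
Proof.
move=> gr hom g; case: (gr) => A l1 r1 lv rv.
set z := act g oneX.
have e : z = mulX z z by rewrite /z -hom l1.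
have : mulX (invX z) z = mulX (invX z) (mulX z z) by rewrite -e.
by rewrite A lv l1.
Qed.

Lemma act_inv {G X : Type} (mulX : X -> X -> X) invX oneX (act : G -> X -> X) :
  is_group mulX invX oneX -> acts_by_homomorphisms mulX act ->
  forall g x, act g (invX x) = invX (act g x).
Proof.
move=> gr hom g x; apply: (grp_inv_uniq gr).
rewrite -hom; case: (gr) => _ _ _ lv _; rewrite lv; exact: (act_one_fix gr hom).
Qed.

Lemma least_nat_ext (P Q : nat -> Prop) : (forall n, P n <-> Q n) ->
  least_nat P = least_nat Q.
Proof.
move=> PQ; have -> // : P = Q.
by apply: funext => n; apply: propext.
Qed.

Lemma pair_at {A B C : topologicalType} (f : A -> B) (g : A -> C) p :
  {for p, continuous f} -> {for p, continuous g} ->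
  {for p, continuous (fun z => (f z, g z))}.
Proof. by move=> cf cg; apply: cvg_pair. Qed.

Lemma comp_at {A B C : topologicalType} (f : A -> B) (g : B -> C) p :
  {for p, continuous f} -> {for f p, continuous g} ->
  {for p, continuous (fun z => g (f z))}.
Proof. by move=> cf cg; exact: (continuous_comp cf cg). Qed.

Lemma fst_at {A B : topologicalType} (p : A * B) : {for p, continuous fst}.
Proof. exact: cvg_fst. Qed.

Lemma snd_at {A B : topologicalType} (p : A * B) : {for p, continuous snd}.
Proof. exact: cvg_snd. Qed.

Lemma cst_at {A B : topologicalType} (b : B) (p : A) : {for p, continuous (fun _ : A => b)}.
Proof. exact: cvg_cst. Qed.

Lemma bin_at {A X Y Z : topologicalType} (op : X -> Y -> Z) (f : A -> X) (g : A -> Y) p :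
  continuous (fun q : X * Y => op q.1 q.2) ->
  {for p, continuous f} -> {for p, continuous g} ->
  {for p, continuous (fun z => op (f z) (g z))}.
Proof.
move=> cop cf cg.
exact: (comp_at (f := fun z => (f z, g z)) (g := fun q : X * Y => op q.1 q.2) (pair_at cf cg) (cop _)).
Qed.

Lemma within_at {A B : topologicalType} (U : set A) (f : A -> B) p :
  open U -> U p -> {within U, continuous f} -> {for p, continuous f}.
Proof.
move=> oU Up; rewrite continuous_open_subspace // => cf.
by apply: cf; exact: mem_set.
Qed.

Lemma openXT {A B : topologicalType} (U : set A) : open U -> open (U `*` [set: B]).
Proof.
move=> oU; have oU' : U `<=` interior U by move: oU; rewrite openE.
rewrite openE => -[x t] [/= Ux _].
exists (U, setT); first by split; [exact: oU' | exact: filterT].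
by move=> [? ?] [? ?].
Qed.

Lemma core_contract (G X : topologicalType)
  (mulG : G -> G -> G) (invG : G -> G) (oneG : G)
  (mulX : X -> X -> X) (invX : X -> X) (oneX : X)
  (act : G -> X -> X) (V : set X) :
  is_topological_group mulG invG oneG ->
  compact [set: G] ->
  is_topological_group mulX invX oneX -> hausdorff_space X ->
  is_continuous_action mulG oneG act ->
  acts_by_homomorphisms mulX act ->
  G_connected mulG invG oneG act ->
  open V -> G_categorical act V ->
  exists Q : X * I01 -> X,
   [/\ forall v t, V v -> {for (v, t), continuous Q},
       forall g v t, V v -> Q (act g v, t) = act g (Q (v, t)),
       forall v, V v -> Q (v, I0) = oneX &
       forall v, V v -> Q (v, I1) = v].
Proof.
move=> [grG cmG cinvG] cG [grX cmX cinvX] hX [act1 actM cact] hom GC oV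
  [invV [x0 [H [cH eqH H0 H1]]]].
set Stab := [set h : G | act h x0 = x0].
have ca : continuous (fun g : G => act g x0).
  move=> g.
  have := @bin_at G G X X act id (fun _ => x0) g cact.
  apply; [exact: cvg_id | exact: cvg_cst].
have clS : closed Stab.
  have -> : Stab = (fun g => act g x0) @^-1` [set x0] by [].
  move/continuous_closedP : ca; apply.
  exact: (accessible_closed_set1 (hausdorff_accessible hX)).
have sS : closed_subgroup mulG invG oneG Stab.
  split => //=.
    by move=> g h; rewrite /Stab /= => Sg Sh; rewrite actM Sh Sg.
  move=> g; rewrite /Stab /= => Sg.
  by rewrite -{1}Sg -actM; case: (grG) => _ _ _ -> _; rewrite act1.
have e1 : forall g, act g oneX = oneX := act_one_fix grX hom.
have [gam [cgam gam0 gam1 gamF]] :=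
  GC Stab sS x0 oneX (fun h Sh => Sh) (fun h _ => e1 h).
have wd : forall g g', act g x0 = act g' x0 -> forall s, act g (gam s) = act g' (gam s).
  move=> g g' e s.
  have Sh : Stab (mulG (invG g') g).
    by rewrite /Stab /= actM e -actM; case: (grG) => _ _ _ -> _; rewrite act1.
  have -> : g = mulG g' (mulG (invG g') g) by rewrite (grp_mulKV grG).
  by rewrite actM (gamF s _ Sh).
have orb : forall v, V v -> exists g, act g x0 = H (v, I1).
  by move=> v Vv; case: (H1 v Vv) => g _ eg; exists g.
pose c v := match pselect (exists g, act g x0 = H (v, I1)) with
  | left h => projT1 (cid h) | right _ => oneG end.
have hc : forall v, V v -> act (c v) x0 = H (v, I1).
  move=> v Vv; rewrite /c; case: pselect => [h|/(_ (orb v Vv))//].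
  exact: (projT2 (cid h)).
pose Q (p : X * I01) := mulX (mulX (H (p.1, revI p.2)) (invX (H (p.1, I1))))
   (act (c p.1) (gam (revI p.2))).
exists Q; split.
- move=> v t Vv.
  have oVT : open (V `*` [set: I01]) := openXT oV.
  have cHat : forall s, {for (v, s), continuous H}.
    by move=> s; apply: (within_at oVT _ cH).
  have cf : {for v, continuous (fun y => H (y, I1))}.
    apply: (comp_at (f := fun y => (y, I1)) (g := H)); last exact: cHat.
    by apply: pair_at; [exact: cvg_id | exact: cvg_cst].
  apply: (bin_at (op := mulX)) => //.
    apply: (bin_at (op := mulX)) => //.
      apply: (comp_at (f := fun p : X * I01 => (p.1, revI p.2)) (g := H)); last exact: cHat.
      apply: pair_at; first exact: fst_at.
      by apply: (comp_at (f := snd) (g := revI)); [exact: snd_at | exact: revI_cont].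
    apply: (comp_at (f := fun p : X * I01 => H (p.1, I1)) (g := invX)); last exact: cinvX.
    exact: (@comp_at _ _ _ fst (fun y => H (y, I1)) (v, t) (@fst_at _ _ (v, t)) cf).
  have cPhi : continuous (fun q : G * I01 => act q.1 (gam (revI q.2))).
    move=> q; apply: (bin_at (op := act)) => //; first exact: fst_at.
    apply: (comp_at (f := fun q : G * I01 => revI q.2) (g := gam)); last exact: cgam.
    by apply: (comp_at (f := snd) (g := revI)); [exact: snd_at | exact: revI_cont].
  apply: (lift_cont (a := fun g => act g x0) (Phi := fun q : G * I01 => act q.1 (gam (revI q.2)))
     (f := fun y => H (y, I1))) => //.
    have : nbhs v V by apply: open_nbhs_nbhs.
    by apply: filterS => y Vy; exact: hc.
  by move=> g eg /=; apply: wd; rewrite eg hc.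
- move=> g v t Vv; rewrite /Q /=.
  have Vgv := invV g v Vv.
  rewrite !eqH //.
  have -> : act (c (act g v)) (gam (revI t)) = act g (act (c v) (gam (revI t))).
    rewrite -actM; apply: wd; rewrite hc // eqH // actM hc //.
  by rewrite !hom (act_inv grX hom).
- move=> v Vv; rewrite /Q /= revI0 gam1 e1.
  by case: (grX) => _ _ r1 _ rv; rewrite rv r1.
- move=> v Vv; rewrite /Q /= revI1 gam0 hc // H0 //.
  exact: (grp_mulVr grX).
Qed.

Lemma grp_mulrKV {T : Type} (mul : T -> T -> T) inv one : is_group mul inv one ->
  forall x y, mul (mul y x) (inv x) = y.
Proof. by case=> A l1 r1 lv rv x y; rewrite -A rv r1. Qed.

Definition cpath (X : topologicalType) (x : X) : path_space X := fun _ => x.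

Lemma cst_path_cont (X : topologicalType) :
  continuous (fun p : X * X => cpath p.1).
Proof.
move=> p; apply/compact_open_cvgP.
move=> K OO cK oO sK.
case: (pselect (K !=set0)) => [[k Kk]|K0].
  have Op : OO p.1 by apply: sK; exists k.
  have hp0 : nbhs p.1 OO by apply: open_nbhs_nbhs.
  have hp : nbhs p (fst @^-1` OO) := @fst_at X X p OO hp0.
  by apply: filterS hp => q Oq _ [z _ <-].
have -> : K = set0 by apply/seteqP; split => // z Kz; exfalso; apply: K0; exists z.
suff : \forall q \near p, [set (cpath q.1) x | x in (set0 : set I01)] `<=` OO by [].
near=> q; rewrite image_set0.
Unshelve. all: by end_near.
Qed.

Lemma partB (G X : topologicalType)
  (mulG : G -> G -> G) (invG : G -> G) (oneG : G)
  (mulX : X -> X -> X) (invX : X -> X) (oneX : X)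
  (act : G -> X -> X) (V : set X) :
  is_topological_group mulG invG oneG ->
  compact [set: G] ->
  is_topological_group mulX invX oneX -> hausdorff_space X ->
  is_continuous_action mulG oneG act ->
  acts_by_homomorphisms mulX act ->
  G_connected mulG invG oneG act ->
  open V -> G_categorical act V ->
  let W := [set p : X * X | V (mulX (invX p.1) p.2)] in
  [/\ open W, Defs.invariant (diag_act act) W & G_motion_planner act W].
Proof.
move=> tG cG tX hX cA hom GC oV catV W.
have [Q [cQ eQ Q0 Q1]] := core_contract tG cG tX hX cA hom GC oV catV.
case: tX => grX cmX cinvX; case: (catV) => invV _.
have ch : continuous (fun p : X * X => mulX (invX p.1) p.2).
  move=> p; apply: (bin_at (op := mulX)) => //; last exact: snd_at.
  by apply: (comp_at (f := fst) (g := invX)); [exact: fst_at | exact: cinvX].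
split.
- by move/continuousP : ch; apply.
- move=> g p; rewrite /W /diag_act /= -(act_inv grX hom) -hom.
  exact: invV.
pose HB (q : (X * X) * I01) :=
  (q.1.1, mulX q.1.1 (Q (mulX (invX q.1.1) q.1.2, q.2))).
exists (fun p => cpath p.1), HB; split.
- move=> u _ t; have h : {for t, continuous (fun _ : I01 => u.1)} by exact: cst_at.
  exact: h.
- apply: continuous_subspaceT; move=> p; exact: cst_path_cont.
- by [].
split.
- apply: continuous_in_subspaceT => -[p t] /set_mem [/= Wp _].
  have c11 : forall z : (X * X) * I01, {for z, continuous (fun q : (X * X) * I01 => q.1.1)}.
    move=> z; apply: (comp_at (f := fst) (g := fst)); exact: fst_at.
  have cin : {for ((p : X * X), (t : I01)), continuous
       (fun q : (X * X) * I01 => (mulX (invX q.1.1) q.1.2, q.2))}.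
    apply: pair_at; last exact: snd_at.
    by apply: (comp_at (f := fst) (g := fun p : X * X => mulX (invX p.1) p.2)); [exact: fst_at | exact: ch].
  have c2 : {for ((p : X * X), (t : I01)), continuous
       (fun q : (X * X) * I01 => mulX q.1.1 (Q (mulX (invX q.1.1) q.1.2, q.2)))}.
    apply: (bin_at (op := mulX)) => //.
    apply: (comp_at (f := fun q : (X * X) * I01 => (mulX (invX q.1.1) q.1.2, q.2)) (g := Q)) => //.
    exact: cQ.
  exact: (pair_at (c11 (p, t)) c2).
- move=> g [x y] t Wu; rewrite /HB /diag_act /=.
  rewrite -(act_inv grX hom) -hom eQ //.
  by rewrite hom.
- by move=> [x y] Wu; rewrite /HB /= Q0 //; case: grX => _ _ r1 _ _; rewrite r1.
- by move=> [x y] Wu; rewrite /HB /= Q1 // (grp_mulKV grX).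
Qed.

Lemma partA (G X : topologicalType)
  (mulG : G -> G -> G) (oneG : G)
  (mulX : X -> X -> X) (invX : X -> X) (oneX : X)
  (act : G -> X -> X) (U : set (X * X)) :
  is_topological_group mulX invX oneX ->
  is_continuous_action mulG oneG act ->
  acts_by_homomorphisms mulX act ->
  open U -> Defs.invariant (diag_act act) U -> G_motion_planner act U ->
  let V := [set x | U (oneX, x)] in open V /\ G_categorical act V.
Proof.
move=> [grX cmX cinvX] [act1 actM cact] hom oU invU [s [H [sc cs seq [cH eqH H0 H1]]]] V.
have e1 := act_one_fix grX hom.
have cj : continuous (fun x : X => (oneX, x)).
  by move=> x; apply: pair_at; [exact: cst_at | exact: cvg_id].
split; first by move/continuousP: cj; apply.
split.
  move=> g x Vx; rewrite /V /=; have := invU g _ Vx.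
  by rewrite /diag_act /= e1.
pose K (q : X * I01) :=
  mulX (mulX (mulX (H ((oneX, q.1), revI q.2)).2 (invX (H ((oneX, q.1), revI q.2)).1))
     (H ((oneX, q.1), I0)).1) (invX ((s (oneX, q.1) : I01 -> X) q.2)).
exists oneX, K; split.
- apply: continuous_in_subspaceT => -[x t] /set_mem [/= Vx _].
  have oUT : open (U `*` [set: I01]) := openXT oU.
  have cHat : forall r : I01, {for ((oneX, x), r), continuous H}.
    by move=> r; apply: (within_at oUT _ cH).
  have cs' : {for (oneX, x), continuous s} := within_at oU Vx cs.
  have cjj : {for ((x : X), (t : I01)), continuous
     (fun q : X * I01 => ((oneX, q.1), revI q.2))}.
    apply: pair_at.
      by apply: (comp_at (f := fst) (g := fun y => (oneX, y))); [exact: fst_at | exact: cj].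
    by apply: (comp_at (f := snd) (g := revI)); [exact: snd_at | exact: revI_cont].
  have cA : {for ((x : X), (t : I01)), continuous
     (fun q : X * I01 => H ((oneX, q.1), revI q.2))}.
    exact: (comp_at cjj (cHat (revI t))).
  have c1 : {for ((x : X), (t : I01)), continuous
     (fun q : X * I01 => (H ((oneX, q.1), revI q.2)).2)}.
    exact: (comp_at cA (@snd_at _ _ _)).
  have c2 : {for ((x : X), (t : I01)), continuous
     (fun q : X * I01 => invX (H ((oneX, q.1), revI q.2)).1)}.
    exact: (comp_at (comp_at cA (@fst_at _ _ _)) (cinvX _)).
  have cB : {for ((x : X), (t : I01)), continuous
     (fun q : X * I01 => ((oneX, q.1), I0))}.
    apply: pair_at; last exact: cst_at.
    by apply: (comp_at (f := fst) (g := fun y => (oneX, y))); [exact: fst_at | exact: cj].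
  have c3 : {for ((x : X), (t : I01)), continuous
     (fun q : X * I01 => (H ((oneX, q.1), I0)).1)}.
    exact: (comp_at (comp_at cB (cHat I0)) (@fst_at _ _ _)).
  have cE : {for ((x : X), (t : I01)), continuous
     (fun q : X * I01 => (s (oneX, q.1) : I01 -> X) q.2)}.
    apply: (eval_at (f := fun y => s (oneX, y))); last exact: sc.
    exact: (comp_at (cj x) cs').
  have c4 : {for ((x : X), (t : I01)), continuous
     (fun q : X * I01 => invX ((s (oneX, q.1) : I01 -> X) q.2))}.
    exact: (comp_at cE (cinvX _)).
  exact: (bin_at cmX (bin_at cmX (bin_at cmX c1 c2) c3) c4).
- move=> g x t Vx; rewrite /K /=.
  have du : (oneX, act g x) = diag_act act g (oneX, x) by rewrite /diag_act /= e1.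
  rewrite du !eqH // seq // /diag_act /=.
  by rewrite !hom !(act_inv grX hom).
- move=> x Vx; rewrite /K /= revI0 H1 // H0 //=.
  rewrite (grp_inv1 grX); case: (grX) => _ _ r1 _ _; rewrite r1.
  exact: (grp_mulrKV grX).
- move=> x Vx; exists oneG => //; rewrite act1 /K /= revI1 H0 // /=.
  by rewrite (grp_mulVr grX); case: (grX) => _ _ _ _ rv; rewrite rv.
Qed.

Unset Implicit Arguments.
Local Close Scope ring_scope.
Local Close Scope classical_set_scope.

Theorem proposition5p12 (G X : topologicalType)
  (mulG : G -> G -> G) (invG : G -> G) (oneG : G)
  (mulX : X -> X -> X) (invX : X -> X) (oneX : X)
  (act : G -> X -> X) :
  is_topological_group mulG invG oneG ->
  compact [set: G] -> hausdorff_space G ->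
  is_topological_group mulX invX oneX -> hausdorff_space X ->
  is_continuous_action mulG oneG act ->
  acts_by_homomorphisms mulX act ->
  G_connected mulG invG oneG act ->
  TCG act = catG act.
Proof.
move=> tG cG hG tX hX cA hom GC.
rewrite /TCG /catG; apply: least_nat_ext => k; split.
- case=> U [oU invU mpU covU].
  exists (fun i => [set x : X | U i (oneX, x)]%classic); split.
  + by move=> i; case: (partA tX cA hom (oU i) (invU i) (mpU i)).
  + by move=> i; case: (partA tX cA hom (oU i) (invU i) (mpU i)).
  + apply/seteqP; split => // x _.
    have : [set: X * X]%classic (oneX, x) by [].
    by rewrite -covU => -[i _ Ui]; exists i.
- case=> V [oV catV covV].
  exists (fun i => [set p : X * X | V i (mulX (invX p.1) p.2)]%classic); split.
  + by move=> i; case: (partB tG cG tX hX cA hom GC (oV i) (catV i)).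
  + by move=> i; case: (partB tG cG tX hX cA hom GC (oV i) (catV i)).
  + by move=> i; case: (partB tG cG tX hX cA hom GC (oV i) (catV i)).
  + apply/seteqP; split => // p _.
    have : [set: X]%classic (mulX (invX p.1) p.2) by [].
    by rewrite -covV => -[i _ Vi]; exists i.
Qed.
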